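(* Let $n\ge2$ and let $\mathcal V$ be a variety with ternary terms $t_1,\dots,t_{n-1}$ satisfying, for some $l,r:\{1,\dots,n-1\}\to\{x,z\}$, the equations $x=t_1(x,l(1),z)$, $t_h(x,r(h),z)=t_{h+1}(x,l(h+1),z)$ ($1\le h<n-1$), $t_{n-1}(x,r(n-1),z)=z$, and $t_h(x,y,x)=x$ for $1\le h\le n-1$. Then: (i) $\mathcal V$ is $(2n-1)$-modular. (ii)(a) If $l(1)=z$, then $\mathcal V$ is $(2n-2)$-modular, and this holds even if $t_1(x,y,x)=x$ is not assumed. (b) If $r(n-1)=x$, then $\mathcal V$ is $(2n-2)$-modular, even if $t_{n-1}(x,y,x)=x$ is not assumed. (c) If $n\ge3$, $l(1)=z$ and $r(n-1)=x$, then $\mathcal V$ is $(2n-3)$-reversed-modular, even if neither $t_1(x,y,x)=x$ nor $t_{n-1}(x,y,x)=x$ is assumed.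
   Context: Day terms: $4$-ary $u_0,\dots,u_m$ with $u_k(x,y,y,x)=x$ for all $k$, $u_0(x,y,z,w)=x$, $u_m(x,y,z,w)=w$, $u_k(x,x,w,w)=u_{k+1}(x,x,w,w)$ for even $k$, $u_k(x,y,y,w)=u_{k+1}(x,y,y,w)$ for odd $k$ ($0\le k<m$); reversed Day terms: even/odd exchanged in the last two conditions. $m$-modular ($m$-reversed-modular): having Day (reversed Day) terms $u_0,\dots,u_m$. *)

(* Defs.v *)
From mathcomp Require Import all_boot.
Set Implicit Arguments. Unset Strict Implicit. Unset Printing Implicit Defensive.

Record signature := Signature { op :> Type; arity : op -> nat }.

Inductive term (S : signature) (X : Type) : Type :=
| Var : X -> term S X
| App : forall o : S, ('I_(arity o) -> term S X) -> term S X.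
Arguments Var {S X} _.
Arguments App {S X} o _.

Record algebra (S : signature) := Algebra {
  carrier :> Type;
  interp : forall o : S, ('I_(arity o) -> carrier) -> carrier }.

Fixpoint eval (S : signature) (A : algebra S) (X : Type) (env : X -> A)
  (t : term S X) : A :=
  match t with
  | Var x => env x
  | App o f => @interp S A o (fun i => eval env (f i))
  end.

(* A variety is given by a set of identities (variables indexed by nat);
   its members are the algebras satisfying all of them (Birkhoff). *)
Definition identities (S : signature) := term S nat * term S nat -> Prop.

Definition model (S : signature) (E : identities S) (A : algebra S) : Prop :=
  forall p, E p -> forall env : nat -> A, eval env p.1 = eval env p.2.

Definition args3 (T : Type) (a b c : T) : 'I_3 -> T :=
  fun i => nth a [:: a; b; c] i.
Definition args4 (T : Type) (a b c d : T) : 'I_4 -> T :=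
  fun i => nth a [:: a; b; c; d] i.

(* The variables x and z, for the functions l, r *)
Inductive xz := VX | VZ.
Definition sel (T : Type) (v : xz) (a c : T) : T :=
  match v with VX => a | VZ => c end.

Definition m_modular (S : signature) (E : identities S) (m : nat) : Prop :=
  exists u : nat -> term S 'I_4,
    forall A : algebra S, model E A -> forall x y z w : A,
      (forall k, k <= m -> eval (args4 x y y x) (u k) = x) /\
      eval (args4 x y z w) (u 0) = x /\
      eval (args4 x y z w) (u m) = w /\
      (forall k, k < m -> ~~ odd k ->
         eval (args4 x x w w) (u k) = eval (args4 x x w w) (u k.+1)) /\
      (forall k, k < m -> odd k ->
         eval (args4 x y y w) (u k) = eval (args4 x y y w) (u k.+1)).

Definition m_reversed_modular (S : signature) (E : identities S) (m : nat) : Prop :=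
  exists u : nat -> term S 'I_4,
    forall A : algebra S, model E A -> forall x y z w : A,
      (forall k, k <= m -> eval (args4 x y y x) (u k) = x) /\
      eval (args4 x y z w) (u 0) = x /\
      eval (args4 x y z w) (u m) = w /\
      (forall k, k < m -> odd k ->
         eval (args4 x x w w) (u k) = eval (args4 x x w w) (u k.+1)) /\
      (forall k, k < m -> ~~ odd k ->
         eval (args4 x y y w) (u k) = eval (args4 x y y w) (u k.+1)).

Definition absorbs (S : signature) (E : identities S) (t : nat -> term S 'I_3)
  (lo hi : nat) : Prop :=
  forall h, lo <= h -> h <= hi ->
    forall A : algebra S, model E A -> forall x y : A,
      eval (args3 x y x) (t h) = x.

(* Main.v *)
Require Import Defs.
From mathcomp Require Import all_boot zify.
From Stdlib Require Import FunctionalExtensionality.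
Set Implicit Arguments. Unset Strict Implicit. Unset Printing Implicit Defensive.

Fixpoint subst (S : signature) (X Y : Type) (t : term S X) (f : X -> term S Y) : term S Y :=
  match t with
  | Var x => f x
  | App o g => App o (fun i => @subst S X Y (g i) f)
  end.

Lemma eval_subst (S : signature) (A : algebra S) X Y (e : Y -> A) (t : term S X) f :
  eval e (subst t f) = eval (fun x => eval e (f x)) t.
Proof.
elim: t => [x|o g IH] //=.
f_equal; apply: functional_extensionality => i; exact: IH.
Qed.

Definition sub3 (S : signature) Y (t : term S 'I_3) (a b c : term S Y) : term S Y :=
  subst t (args3 a b c).

Lemma eval_sub3 (S : signature) (A : algebra S) Y (e : Y -> A) t (a b c : term S Y) :
  eval e (sub3 t a b c) = eval (args3 (eval e a) (eval e b) (eval e c)) t.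
Proof.
rewrite /sub3 eval_subst; congr eval; apply: functional_extensionality.
by case=> [[|[|[|m]]] Hm].
Qed.

Definition vx {S : signature} : term S 'I_4 := Var (@Ordinal 4 0 isT).
Definition vy {S : signature} : term S 'I_4 := Var (@Ordinal 4 1 isT).
Definition vz {S : signature} : term S 'I_4 := Var (@Ordinal 4 2 isT).
Definition vw {S : signature} : term S 'I_4 := Var (@Ordinal 4 3 isT).

Lemma selaa (T : Type) v (a : T) : sel v a a = a. Proof. by case: v. Qed.

Lemma eval_sel (S : signature) (A : algebra S) Y (e : Y -> A) v (a b : term S Y) :
  eval e (sel v a b) = sel v (eval e a) (eval e b).
Proof. by case: v. Qed.

Definition T4 (S : signature) (t : term S 'I_3) (v : xz) : term S 'I_4 :=
  sub3 t vx (sel v vy vz) vw.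

Lemma evalT4 (S : signature) (A : algebra S) (a b c d : A) t v :
  eval (args4 a b c d) (T4 t v) = eval (args3 a (sel v b c) d) t.
Proof. by rewrite /T4 eval_sub3; case: v. Qed.

Lemma parity k : (exists h, k = h.*2) \/ (exists h, k = h.*2.+1).
Proof.
move: (odd_double_half k); case: (odd k) => /= <-; [right|left]; eexists; reflexivity.
Qed.


Section Parts.
Variables (S : signature) (E : identities S) (n : nat)
  (t : nat -> term S 'I_3) (l r : nat -> xz).
Hypothesis n2 : 2 <= n.
Hypothesis H1 : forall A : algebra S, model E A -> forall x z : A,
     x = eval (args3 x (sel (l 1) x z) z) (t 1).
Hypothesis Hc : forall h, 1 <= h -> h < n.-1 ->
     forall A : algebra S, model E A -> forall x z : A,
       eval (args3 x (sel (r h) x z) z) (t h)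
       = eval (args3 x (sel (l h.+1) x z) z) (t h.+1).
Hypothesis Hn : forall A : algebra S, model E A -> forall x z : A,
     eval (args3 x (sel (r n.-1) x z) z) (t n.-1) = z.

Definition u1 (k : nat) : term S 'I_4 :=
  if k == 0 then vx else if 2 * n - 1 <= k then vw
  else if odd k then T4 (t k.+1./2) (l k.+1./2) else T4 (t k./2) (r k./2).

Lemma u1_even h : 1 <= h -> h.*2 < 2 * n - 1 -> u1 h.*2 = T4 (t h) (r h).
Proof.
move=> h1 hm; rewrite /u1 odd_double half_double.
have -> : (h.*2 == 0) = false by lia.
by have -> : (2 * n - 1 <= h.*2) = false by lia.
Qed.

Lemma u1_odd h : h.*2.+1 < 2 * n - 1 -> u1 h.*2.+1 = T4 (t h.+1) (l h.+1).
Proof.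
move=> hm; rewrite /u1 /= odd_double /= half_double.
by have -> : (2 * n - 1 <= h.*2.+1) = false by lia.
Qed.

Lemma part1 : absorbs E t 1 n.-1 -> m_modular E (2 * n - 1).
Proof.
move=> Hab; exists u1 => A HA x y z w; split; [|split; [|split; [|split]]].
- move=> k; have [[h ->]|[h ->]] := parity k => Hk.
  + case: h => [|h] in Hk *; first by [].
    case: (ltnP h.+1.*2 (2 * n - 1)) => Hm.
      rewrite u1_even // evalT4 selaa; apply: Hab => //; lia.
    by rewrite /u1; case: ifP => //; rewrite Hm.
  + case: (ltnP h.*2.+1 (2 * n - 1)) => Hm.
      rewrite u1_odd // evalT4 selaa; apply: Hab => //; lia.
    by rewrite /u1 /= Hm.
- by [].
- rewrite /u1; have -> : (2 * n - 1 == 0) = false by lia.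
  by rewrite leqnn.
- move=> k; have [[h ->]|[h ->]] := parity k => Hk; last by rewrite /= odd_double.
  move=> _; case: h => [|h] in Hk *.
    rewrite (@u1_odd 0) /=; last by lia.
    by rewrite evalT4 -(H1 HA).
  rewrite u1_even //.
  case: (ltnP h.+1.*2.+1 (2 * n - 1)) => Hm.
    rewrite u1_odd // !evalT4; apply: Hc => //; lia.
  have -> : u1 h.+1.*2.+1 = vw by rewrite /u1 /= Hm.
  have Eh : h.+1 = n.-1 by lia.
  by rewrite evalT4 Eh Hn.
- move=> k; have [[h ->]|[h ->]] := parity k => Hk; first by rewrite /= odd_double.
  move=> _; rewrite u1_odd // -doubleS u1_even //; last by lia.
  by rewrite !evalT4 !selaa.
Qed.

Definition F4 : term S 'I_4 := sub3 (t n.-1) vy (sel (l n.-1) vy vz) vw.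

Lemma evalF4 (A : algebra S) (a b c d : A) :
  eval (args4 a b c d) F4 = eval (args3 b (sel (l n.-1) b c) d) (t n.-1).
Proof. by rewrite /F4 eval_sub3; case: (l n.-1). Qed.

Definition u2 (k : nat) : term S 'I_4 :=
  if k == 0 then vx else if 2 * n - 2 <= k then vw
  else if k == 2 * n - 3 then F4
  else if odd k then T4 (t k.+1./2) (l k.+1./2) else T4 (t k./2) (r k./2).

Lemma u2_even h : 1 <= h -> h.*2 < 2 * n - 2 -> u2 h.*2 = T4 (t h) (r h).
Proof.
move=> h1 hm; rewrite /u2 odd_double half_double.
have -> : (h.*2 == 0) = false by lia.
have -> : (h.*2 == 2 * n - 3) = false by lia.
by have -> : (2 * n - 2 <= h.*2) = false by lia.
Qed.

Lemma u2_odd h : h.*2.+1 < 2 * n - 3 -> u2 h.*2.+1 = T4 (t h.+1) (l h.+1).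
Proof.
move=> hm; rewrite /u2 /= odd_double /= half_double.
have -> : (h.*2.+1 == 2 * n - 3) = false by lia.
by have -> : (2 * n - 2 <= h.*2.+1) = false by lia.
Qed.

Lemma u2_F : u2 (2 * n - 3) = F4.
Proof.
rewrite /u2; have -> : (2 * n - 3 == 0) = false by lia.
have -> : (2 * n - 2 <= 2 * n - 3) = false by lia.
by rewrite eqxx.
Qed.

Lemma u2_W k : 2 * n - 2 <= k -> u2 k = vw.
Proof.
move=> hk; rewrite /u2; have -> : (k == 0) = false by lia.
by rewrite hk.
Qed.

Lemma part2 : r n.-1 = VX -> absorbs E t 1 (n - 2) -> m_modular E (2 * n - 2).
Proof.
move=> rX Hab.
have Hn' : forall A : algebra S, model E A -> forall x z : A,
    eval (args3 x x z) (t n.-1) = z by move=> A HA x z; rewrite -{2}(Hn HA x z) rX.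
exists u2 => A HA x y z w; split; [|split; [|split; [|split]]].
- move=> k; have [[h ->]|[h ->]] := parity k => Hk.
  + case: h => [|h] in Hk *; first by [].
    case: (ltnP h.+1.*2 (2 * n - 2)) => Hm; last by rewrite u2_W.
    rewrite u2_even // evalT4 selaa; apply: Hab => //; lia.
  + case: (ltnP h.*2.+1 (2 * n - 3)) => Hm.
      rewrite u2_odd // evalT4 selaa; apply: Hab => //; lia.
    case: (ltnP h.*2.+1 (2 * n - 2)) => Hm'; last by rewrite u2_W.
    have -> : h.*2.+1 = 2 * n - 3 by lia.
    by rewrite u2_F evalF4 selaa Hn'.
- by [].
- by rewrite u2_W.
- move=> k; have [[h ->]|[h ->]] := parity k => Hk; last by rewrite /= odd_double.
  move=> _; case: h => [|h] in Hk *.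
    case: (ltnP 1 (2 * n - 3)) => Hm.
      rewrite (@u2_odd 0) /=; last by lia.
      by rewrite evalT4 -(H1 HA).
    have E1 : 1 = 2 * n - 3 by lia.
    have En : n.-1 = 1 by lia.
    have -> : u2 1 = F4 by rewrite -u2_F; congr u2.
    rewrite evalF4 En -(H1 HA); by [].
  rewrite u2_even //.
  case: (ltnP h.+1.*2.+1 (2 * n - 3)) => Hm.
    rewrite u2_odd // !evalT4; apply: Hc => //; lia.
  have -> : h.+1.*2.+1 = 2 * n - 3 by lia.
  have Eh : n.-1 = h.+2 by lia.
  rewrite u2_F evalF4 evalT4 Eh; apply: Hc => //; lia.
- move=> k; have [[h ->]|[h ->]] := parity k => Hk; first by rewrite /= odd_double.
  move=> _; case: (ltnP h.*2.+1 (2 * n - 3)) => Hm.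
    rewrite u2_odd // -doubleS u2_even //; last by lia.
    by rewrite !evalT4 !selaa.
  have -> : h.*2.+1 = 2 * n - 3 by lia.
  rewrite u2_F u2_W; last by lia.
  by rewrite evalF4 selaa Hn'.
Qed.

Definition G4 : term S 'I_4 := sub3 (t 1) vx (sel (r 1) vy vz) vz.

Lemma evalG4 (A : algebra S) (a b c d : A) :
  eval (args4 a b c d) G4 = eval (args3 a (sel (r 1) b c) c) (t 1).
Proof. by rewrite /G4 eval_sub3; case: (r 1). Qed.

Definition u3 (k : nat) : term S 'I_4 :=
  if k == 0 then vx else if 2 * n - 3 <= k then vw
  else if k == 1 then G4
  else if k == 2 * n - 4 then F4
  else if odd k then T4 (t k.+1./2) (r k.+1./2) else T4 (t (k./2).+1) (l (k./2).+1).

Lemma u3_even h : 1 <= h -> h.*2 < 2 * n - 4 -> u3 h.*2 = T4 (t h.+1) (l h.+1).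
Proof.
move=> h1 hm; rewrite /u3 odd_double half_double.
have -> : (h.*2 == 0) = false by lia.
have -> : (h.*2 == 1) = false by lia.
have -> : (h.*2 == 2 * n - 4) = false by lia.
by have -> : (2 * n - 3 <= h.*2) = false by lia.
Qed.

Lemma u3_odd h : 1 <= h -> h.*2.+1 < 2 * n - 3 -> u3 h.*2.+1 = T4 (t h.+1) (r h.+1).
Proof.
move=> h1 hm; rewrite /u3 /= odd_double /= half_double.
have -> : (h.*2.+1 == 2 * n - 4) = false by lia.
have -> : (2 * n - 3 <= h.*2.+1) = false by lia.
by have -> : (h.*2.+1 == 1) = false by lia.
Qed.

Lemma u3_G : 3 <= n -> u3 1 = G4.
Proof.
move=> n3; rewrite /u3 /=.
by have -> : (2 * n - 3 <= 1) = false by lia.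
Qed.

Lemma u3_F : 3 <= n -> u3 (2 * n - 4) = F4.
Proof.
move=> n3; rewrite /u3; have -> : (2 * n - 4 == 0) = false by lia.
have -> : (2 * n - 3 <= 2 * n - 4) = false by lia.
have -> : (2 * n - 4 == 1) = false by lia.
by rewrite eqxx.
Qed.

Lemma u3_W k : 2 * n - 3 <= k -> u3 k = vw.
Proof.
move=> hk; rewrite /u3; have -> : (k == 0) = false by lia.
by rewrite hk.
Qed.

Lemma part3 : 3 <= n -> l 1 = VZ -> r n.-1 = VX -> absorbs E t 2 (n - 2) ->
     m_reversed_modular E (2 * n - 3).
Proof.
move=> n3 lZ rX Hab.
have Hn' : forall A : algebra S, model E A -> forall x z : A,
    eval (args3 x x z) (t n.-1) = z by move=> A HA x z; rewrite -{2}(Hn HA x z) rX.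
have H1' : forall A : algebra S, model E A -> forall x z : A,
    eval (args3 x z z) (t 1) = x by move=> A HA x z; rewrite {2}(H1 HA x z) lZ.
exists u3 => A HA x y z w; split; [|split; [|split; [|split]]].
- move=> k; have [[h ->]|[h ->]] := parity k => Hk.
  + case: h => [|h] in Hk *; first by [].
    case: (ltnP h.+1.*2 (2 * n - 4)) => Hm.
      rewrite u3_even // evalT4 selaa; apply: Hab => //; lia.
    case: (ltnP h.+1.*2 (2 * n - 3)) => Hm'; last by rewrite u3_W.
    have -> : h.+1.*2 = 2 * n - 4 by lia.
    by rewrite u3_F // evalF4 selaa Hn'.
  + case: h => [|h] in Hk *.
      by rewrite u3_G // evalG4 selaa H1'.
    case: (ltnP h.+1.*2.+1 (2 * n - 3)) => Hm; last by rewrite u3_W.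
    rewrite u3_odd // evalT4 selaa; apply: Hab => //; lia.
- by [].
- by rewrite u3_W.
- move=> k; have [[h ->]|[h ->]] := parity k => Hk; first by rewrite /= odd_double.
  move=> _; case: h => [|h] in Hk *.
    rewrite u3_G // evalG4.
    case: (ltnP 2 (2 * n - 4)) => Hm.
      rewrite (@u3_even 1) //= evalT4; apply: Hc => //; lia.
    have En : n.-1 = 2 by lia.
    have -> : u3 2 = F4 by rewrite -u3_F //; congr u3; lia.
    rewrite evalF4 En; apply: Hc => //; lia.
  rewrite u3_odd // -doubleS.
  case: (ltnP h.+2.*2 (2 * n - 4)) => Hm.
    rewrite u3_even // !evalT4; apply: Hc => //; lia.
  have -> : h.+2.*2 = 2 * n - 4 by lia.
  have Eh : n.-1 = h.+3 by lia.
  rewrite u3_F // evalF4 evalT4 Eh; apply: Hc => //; lia.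
- move=> k; have [[h ->]|[h ->]] := parity k => Hk; last by rewrite /= odd_double.
  move=> _; case: h => [|h] in Hk *.
    by rewrite /= u3_G // evalG4 selaa H1'.
  case: (ltnP h.+1.*2 (2 * n - 4)) => Hm.
    rewrite u3_even // u3_odd //; last by lia.
    by rewrite !evalT4 !selaa.
  have -> : h.+1.*2 = 2 * n - 4 by lia.
  rewrite u3_F // u3_W; last by lia.
  by rewrite evalF4 selaa Hn'.
Qed.
End Parts.



Definition swp v := match v with VX => VZ | VZ => VX end.
Lemma sel_swp (T : Type) v (a b : T) : sel (swp v) a b = sel v b a.
Proof. by case: v. Qed.

Lemma parta (S : signature) (E : identities S) (n : nat)
  (t : nat -> term S 'I_3) (l r : nat -> xz) :
  2 <= n ->
  (forall A : algebra S, model E A -> forall x z : A,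
     x = eval (args3 x (sel (l 1) x z) z) (t 1)) ->
  (forall h, 1 <= h -> h < n.-1 ->
     forall A : algebra S, model E A -> forall x z : A,
       eval (args3 x (sel (r h) x z) z) (t h)
       = eval (args3 x (sel (l h.+1) x z) z) (t h.+1)) ->
  (forall A : algebra S, model E A -> forall x z : A,
     eval (args3 x (sel (r n.-1) x z) z) (t n.-1) = z) ->
  l 1 = VZ -> absorbs E t 2 n.-1 -> m_modular E (2 * n - 2).
Proof.
move=> n2 H1 Hc Hn lZ Hab.
pose t' h := sub3 (t (n - h)) (Var (@Ordinal 3 2 isT)) (Var (@Ordinal 3 1 isT))
  (Var (@Ordinal 3 0 isT)).
pose l' h := swp (r (n - h)).
pose r' h := swp (l (n - h)).
have et : forall (A : algebra S) (a b c : A) h,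
    eval (args3 a b c) (t' h) = eval (args3 c b a) (t (n - h)).
  by move=> A a b c h; rewrite /t' eval_sub3.
apply: (@part2 S E n t' l' r') => //.
- move=> A HA x z; rewrite et /l' sel_swp; have -> : n - 1 = n.-1 by lia.
  by rewrite Hn.
- move=> h h1 hn A HA x z; rewrite !et /l' /r' !sel_swp.
  have -> : n - h = (n - h.+1).+1 by lia.
  symmetry; apply: Hc => //; lia.
- move=> A HA x z; rewrite et /r' sel_swp; have -> : n - n.-1 = 1 by lia.
  by rewrite -(H1 _ HA).
- rewrite /r'; have -> : n - n.-1 = 1 by lia.
  by rewrite lZ.
- move=> h h1 h2 A HA x y; rewrite et; apply: Hab => //; lia.
Qed.

Theorem corollary7p11 (S : signature) (E : identities S) (n : nat)
  (t : nat -> term S 'I_3) (l r : nat -> xz) :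
  2 <= n ->
  (forall A : algebra S, model E A -> forall x z : A,
     x = eval (args3 x (sel (l 1) x z) z) (t 1)) ->
  (forall h, 1 <= h -> h < n.-1 ->
     forall A : algebra S, model E A -> forall x z : A,
       eval (args3 x (sel (r h) x z) z) (t h)
       = eval (args3 x (sel (l h.+1) x z) z) (t h.+1)) ->
  (forall A : algebra S, model E A -> forall x z : A,
     eval (args3 x (sel (r n.-1) x z) z) (t n.-1) = z) ->
  (absorbs E t 1 n.-1 -> m_modular E (2 * n - 1)) /\
  (l 1 = VZ -> absorbs E t 2 n.-1 -> m_modular E (2 * n - 2)) /\
  (r n.-1 = VX -> absorbs E t 1 (n - 2) -> m_modular E (2 * n - 2)) /\
  (3 <= n -> l 1 = VZ -> r n.-1 = VX -> absorbs E t 2 (n - 2) ->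
     m_reversed_modular E (2 * n - 3)).
Proof.
move=> n2 H1 Hc Hn; split; [|split; [|split]].
- exact: (@part1 S E n t l r n2 H1 Hc Hn).
- exact: (@parta S E n t l r n2 H1 Hc Hn).
- exact: (@part2 S E n t l r n2 H1 Hc Hn).
- exact: (@part3 S E n t l r n2 H1 Hc Hn).
Qed.
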